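(* In the standing setting, suppose $0<\alpha_k\le\frac1{2M\tilde L}$ for all $k\ge0$. Fix $\ell\in\{1,\dots,N\}$ and $n\ge0$, and define the numbers $A_k,B_k,C_k$ ($0\le k\le n$) as in the context. Then for every $k\in\{0,\dots,n\}$, almost surely $$\mathbb{E}[\langle x_{n+1}-x_*,v_\ell\rangle^2\mid x_k]\le A_k\langle x_k-x_*,v_\ell\rangle^2+B_k\|x_k-x_*\|^2+C_k.$$ In particular (case $k=0$), $\mathbb{E}[\langle x_{n+1}-x_*,v_\ell\rangle^2]\le A_0\langle x_0-x_*,v_\ell\rangle^2+B_0\|x_0-x_*\|^2+C_0$.
   Context: Standing setting: $M\ge N$, $A\in\mathbb{R}^{M\times N}$ of full column rank with rows $a_1,\dots,a_M$, $b\in\mathbb{R}^M$, $F(x)=\tfrac12\|Ax-b\|^2$, $x_*$ the unique minimizer, $F_*=F(x_* )$. Singular values $\sigma_1\ge\dots\ge\sigma_N>0$ with orthonormal right singular vectors $v_1,\dots,v_N$; $\sigma_{\max}=\sigma_1$, $\sigma_{\min}=\sigma_N$, $c(A)=\sigma_{\max}^2/\sigma_{\min}^2$, $\tilde L=\max_i\|a_i\|^2$. $f_i(x)=\frac M2(\langle a_i,x\rangle-b_i)^2$; $\sigma^2=\frac1M\sum_i\|\nabla f_i(x_* )\|^2$. SGD: deterministic $x_0$, deterministic step sizes $\alpha_k>0$, $i_k$ i.i.d. uniform on $\{1,\dots,M\}$, $x_{k+1}=x_k-\alpha_k\nabla f_{i_k}(x_k)$. For $\alpha>0$ put $A(\alpha)=1-2\alpha\sigma_\ell^2$,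 $B(\alpha)=\alpha^2M\tilde Lc(A)\sigma_{\max}^2$, $C(\alpha)=2\alpha^2M\tilde LF_*$, $p(\alpha)=1-\alpha\sigma_{\min}^2$, $q(\alpha)=2\alpha^2\sigma^2$. For fixed $n$ and $0\le k\le n$: $A_k=\prod_{i=k}^nA(\alpha_i)$; $B_k=\sum_{j=k}^n\Big(\prod_{i=j+1}^nA(\alpha_i)\Big)B(\alpha_j)\Big(\prod_{i=k}^{j-1}p(\alpha_i)\Big)$; $C_k=\sum_{i=k+1}^n\big(q(\alpha_{i-1})B_i+A_iC(\alpha_{i-1})\big)+C(\alpha_n)$ (empty products equal $1$, empty sums $0$). *)

(* Defs.v *)
From HB Require Import structures.
From mathcomp Require Import all_boot all_order all_algebra.
From mathcomp Require Import reals.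
Set Implicit Arguments. Unset Strict Implicit. Unset Printing Implicit Defensive.
Import Order.TTheory GRing.Theory Num.Theory.
Local Open Scope ring_scope.

Section SGD.
Variable R : realType.

Definition dotv (N : nat) (u w : 'cV[R]_N) : R := \sum_(i < N) u i 0 * w i 0.
Definition norm2 (N : nat) (u : 'cV[R]_N) : R := dotv u u.

Variables (M N : nat) (A : 'M[R]_(M, N)) (b : 'cV[R]_M).

Definition arow (i : 'I_M) : 'cV[R]_N := (row i A)^T.

Definition lsF (x : 'cV[R]_N) : R := 2^-1 * norm2 (A *m x - b).

Definition f_i (i : 'I_M) (x : 'cV[R]_N) : R :=
  (M%:R / 2) * (dotv (arow i) x - b i 0) ^+ 2.
Definition grad_f (i : 'I_M) (x : 'cV[R]_N) : 'cV[R]_N :=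
  (M%:R * (dotv (arow i) x - b i 0)) *: arow i.

Definition Ltilde : R := \big[Num.max/0]_(i < M) norm2 (arow i).

Definition sgd_noise (xs : 'cV[R]_N) : R :=
  M%:R^-1 * \sum_(i < M) norm2 (grad_f i xs).

Fixpoint sgd_iter (n : nat) (x0 : 'cV[R]_N) (alpha : nat -> R)
    (omega : {ffun 'I_n.+1 -> 'I_M}) (k : nat) : 'cV[R]_N :=
  match k with
  | 0 => x0
  | k'.+1 => let xk := sgd_iter x0 alpha omega k' in
             xk - alpha k' *: grad_f (omega (inord k')) xk
  end.

End SGD.

(* Discrete probability: uniform measure on the finite sample space
   Omega = {ffun 'I_n.+1 -> 'I_M} of index sequences (i_0,...,i_n), i.i.d. uniform. *)
Section Prob.
Variables (R : realType) (Omega : finType).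

Definition expect (Y : Omega -> R) : R :=
  (\sum_(w : Omega) Y w) / #|Omega|%:R.

Definition cond_exp (T : eqType) (Y : Omega -> R) (X : Omega -> T) (w : Omega) : R :=
  (\sum_(w' : Omega | X w' == X w) Y w') / #|[pred w' | X w' == X w]|%:R.
End Prob.

Section Coeffs.
Variables (R : realType) (M : nat) (Lt cA smax smin sl Fstar sig2 : R).
Variable alpha : nat -> R.
Variable n : nat.

Definition Afac (a : R) : R := 1 - 2 * a * sl ^+ 2.
Definition Bfac (a : R) : R := a ^+ 2 * M%:R * Lt * cA * smax ^+ 2.
Definition Cfac (a : R) : R := 2 * a ^+ 2 * M%:R * Lt * Fstar.
Definition pfac (a : R) : R := 1 - a * smin ^+ 2.
Definition qfac (a : R) : R := 2 * a ^+ 2 * sig2.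

Definition Acoef (k : nat) : R := \prod_(k <= i < n.+1) Afac (alpha i).
Definition Bcoef (k : nat) : R :=
  \sum_(k <= j < n.+1)
     (\prod_(j.+1 <= i < n.+1) Afac (alpha i)) * Bfac (alpha j)
       * (\prod_(k <= i < j) pfac (alpha i)).
Definition Ccoef (k : nat) : R :=
  \sum_(k.+1 <= i < n.+1)
     (qfac (alpha i.-1) * Bcoef i + Acoef i * Cfac (alpha i.-1))
  + Cfac (alpha n).
End Coeffs.

(* Main.v *)
Require Import Defs.
From HB Require Import structures.
From mathcomp Require Import all_boot all_order all_algebra.
From mathcomp Require Import reals ring lra zify.
Set Implicit Arguments. Unset Strict Implicit. Unset Printing Implicit Defensive.
Import Order.TTheory GRing.Theory Num.Theory.
Local Open Scope ring_scope.

Section LA.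
Variable R : realType.
Implicit Types (N : nat).

Lemma dotvE N (u w : 'cV[R]_N) : dotv u w = (u^T *m w) 0 0.
Proof. by rewrite /dotv !mxE; apply: eq_bigr => i _; rewrite mxE. Qed.

Lemma dotvC N (u w : 'cV[R]_N) : dotv u w = dotv w u.
Proof. by apply: eq_bigr => i _; rewrite mulrC. Qed.

Lemma dotvDl N (u w z : 'cV[R]_N) : dotv (u + w) z = dotv u z + dotv w z.
Proof. by rewrite /dotv -big_split; apply: eq_bigr => i _; rewrite !mxE mulrDl. Qed.

Lemma dotvNl N (u z : 'cV[R]_N) : dotv (- u) z = - dotv u z.
Proof. by rewrite /dotv -sumrN; apply: eq_bigr => i _; rewrite !mxE mulNr. Qed.

Lemma dotvBl N (u w z : 'cV[R]_N) : dotv (u - w) z = dotv u z - dotv w z.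
Proof. by rewrite dotvDl dotvNl. Qed.

Lemma dotvZl N a (u z : 'cV[R]_N) : dotv (a *: u) z = a * dotv u z.
Proof. by rewrite /dotv mulr_sumr; apply: eq_bigr => i _; rewrite !mxE mulrA. Qed.

Lemma dotvDr N (u w z : 'cV[R]_N) : dotv z (u + w) = dotv z u + dotv z w.
Proof. by rewrite dotvC dotvDl !(dotvC z). Qed.
Lemma dotvBr N (u w z : 'cV[R]_N) : dotv z (u - w) = dotv z u - dotv z w.
Proof. by rewrite dotvC dotvBl !(dotvC z). Qed.
Lemma dotvZr N a (u z : 'cV[R]_N) : dotv z (a *: u) = a * dotv z u.
Proof. by rewrite dotvC dotvZl dotvC. Qed.

Lemma norm2_ge0 N (u : 'cV[R]_N) : 0 <= norm2 u.
Proof. by apply: sumr_ge0 => i _; rewrite -expr2 sqr_ge0. Qed.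

Lemma norm2_lin N (u w : 'cV[R]_N) (t : R) :
  norm2 (u + t *: w) = norm2 u + 2 * t * dotv u w + t ^+ 2 * norm2 w.
Proof.
rewrite /norm2 dotvDl !dotvDr !dotvZl !dotvZr (dotvC w u); ring.
Qed.

Lemma norm2_linB N (u w : 'cV[R]_N) (t : R) :
  norm2 (u - t *: w) = norm2 u - 2 * t * dotv u w + t ^+ 2 * norm2 w.
Proof. by rewrite -scaleNr norm2_lin; ring. Qed.

Lemma cs_unit N (a v : 'cV[R]_N) : norm2 v = 1 -> dotv a v ^+ 2 <= norm2 a.
Proof.
move=> hv; have := norm2_ge0 (a - dotv a v *: v).
rewrite norm2_linB hv; lra.
Qed.

Lemma quad_zero (c d2 : R) : 0 <= d2 -> (forall t, 0 <= 2 * t * c + t ^+ 2 * d2) -> c = 0.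
Proof.
move=> hd h; set t := - c / (1 + d2).
have hpos : 0 < 1 + d2 by lra.
have ht : t * (1 + d2) = - c by rewrite /t mulrVK // unitfE gt_eqF.
have h1 := mulr_ge0 (ltW hpos) (h t).
have e1 : (1 + d2) * (2 * t * c + t ^+ 2 * d2) = - 2 * c ^+ 2 - t * c * d2.
  transitivity ((2 * c + t * d2) * (t * (1 + d2))); first by ring.
  by rewrite ht; ring.
have e2 : (t * c) * (1 + d2) = - c ^+ 2 by rewrite mulrAC ht; ring.
have htc : t * c <= 0.
  have : (t * c) * (1 + d2) <= 0 by rewrite e2 oppr_le0 sqr_ge0.
  by rewrite pmulr_lle0.
have : c ^+ 2 <= 0 by nra.
by rewrite le_eqVlt ltNge sqr_ge0 orbF sqrf_eq0 => /eqP.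
Qed.

Variables (M N : nat) (A : 'M[R]_(M, N)) (b : 'cV[R]_M).

Lemma mulA_entry (x : 'cV[R]_N) i : (A *m x) i 0 = dotv (arow A i) x.
Proof. by rewrite mxE; apply: eq_bigr => j _; rewrite !mxE. Qed.

Lemma res_entry (x : 'cV[R]_N) i : (A *m x - b) i 0 = dotv (arow A i) x - b i 0.
Proof. by rewrite mxE [(- b) i 0]mxE mulA_entry. Qed.

Lemma dotvA (x y : 'cV[R]_N) :
  dotv (A *m x) (A *m y) = \sum_i dotv (arow A i) x * dotv (arow A i) y.
Proof. by apply: eq_bigr => i _; rewrite !mulA_entry. Qed.

Lemma dotvAres (x y : 'cV[R]_N) :
  dotv (A *m x - b) (A *m y) = \sum_i (dotv (arow A i) x - b i 0) * dotv (arow A i) y.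
Proof. by apply: eq_bigr => i _; rewrite res_entry mulA_entry. Qed.

Lemma dotvAtA (x y : 'cV[R]_N) : dotv (A *m x) (A *m y) = dotv x (A^T *m A *m y).
Proof. by rewrite !dotvE trmx_mul !mulmxA. Qed.

Lemma mincond (xs : 'cV[R]_N) : (forall x, lsF A b xs <= lsF A b x) ->
  forall d, dotv (A *m xs - b) (A *m d) = 0.
Proof.
move=> hmin d; apply: (quad_zero (d2 := norm2 (A *m d))); first exact: norm2_ge0.
move=> t; have := hmin (xs + t *: d).
rewrite /lsF mulmxDr -scalemxAr addrAC norm2_lin; lra.
Qed.

Section Basis.
Variables (sigma : 'I_N -> R) (v : 'I_N -> 'cV[R]_N).
Hypothesis hon : forall i j, dotv (v i) (v j) = (i == j)%:R.
Hypothesis heig : forall i, A^T *m A *m v i = sigma i ^+ 2 *: v i.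

Let V : 'M[R]_N := \matrix_(i, j) v j i 0.

Lemma VtV : V^T *m V = 1%:M.
Proof.
apply/matrixP => i j; rewrite !mxE -hon; apply: eq_bigr => k _; by rewrite !mxE.
Qed.

Lemma VVt : V *m V^T = 1%:M.
Proof. exact: mulmx1C VtV. Qed.

Lemma Vt_entry (e : 'cV[R]_N) j : (V^T *m e) j 0 = dotv (v j) e.
Proof. by rewrite mxE; apply: eq_bigr => k _; rewrite !mxE. Qed.

Lemma norm2_basis (e : 'cV[R]_N) : norm2 e = \sum_j dotv (v j) e ^+ 2.
Proof.
have h : e^T *m e = (V^T *m e)^T *m (V^T *m e).
  by rewrite trmx_mul trmxK mulmxA -(mulmxA e^T) VVt mulmx1.
rewrite /norm2 dotvE h -dotvE.
by apply: eq_bigr => j _; rewrite Vt_entry expr2.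
Qed.

Lemma ATAV : A^T *m A *m V = V *m diag_mx (\row_j sigma j ^+ 2).
Proof.
apply/matrixP => i j; rewrite mul_mx_diag !mxE.
have := congr1 (fun m : 'cV[R]_N => m i 0) (heig j); rewrite /= !mxE mulrC => <-.
by apply: eq_bigr => k _; rewrite !mxE.
Qed.

Lemma norm2A_basis (e : 'cV[R]_N) :
  norm2 (A *m e) = \sum_j sigma j ^+ 2 * dotv (v j) e ^+ 2.
Proof.
set D := diag_mx (\row_j sigma j ^+ 2).
have hATA : A^T *m A = V *m D *m V^T by rewrite -ATAV -mulmxA VVt mulmx1.
rewrite /norm2 dotvAtA dotvE hATA.
set c := V^T *m e.
have -> : e^T *m (V *m D *m V^T *m e) = c^T *m D *m c.
  by rewrite /c trmx_mul trmxK !mulmxA.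
rewrite mxE; apply: eq_bigr => j _.
rewrite -Vt_entry -/c; clearbody c; rewrite mul_mx_diag !mxE; ring.
Qed.

Lemma normA_bounds (lo hi : R) (e : 'cV[R]_N) :
  (forall j, lo ^+ 2 <= sigma j ^+ 2 <= hi ^+ 2) ->
  lo ^+ 2 * norm2 e <= norm2 (A *m e) <= hi ^+ 2 * norm2 e.
Proof.
move=> hb; rewrite norm2A_basis norm2_basis !mulr_sumr; apply/andP; split;
  apply: ler_sum => j _; have /andP[h1 h2] := hb j;
  by apply: ler_wpM2r => //; rewrite sqr_ge0.
Qed.
End Basis.

Lemma arow_le i : norm2 (arow A i) <= Ltilde A.
Proof. exact: (le_bigmax 0 (fun i => norm2 (arow A i)) i). Qed.

Lemma Lt_ge0 : 0 <= Ltilde A.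
Proof.
rewrite /Ltilde; elim/big_ind: _ => //.
  by move=> x y hx hy; rewrite le_max hx.
by move=> i _; exact: norm2_ge0.
Qed.

Lemma resE (x xs : 'cV[R]_N) i :
  dotv (arow A i) x - b i 0 = dotv (arow A i) (x - xs) + (dotv (arow A i) xs - b i 0).
Proof. by rewrite dotvBr; ring. Qed.

Lemma AxbE (x xs : 'cV[R]_N) : A *m x - b = A *m (x - xs) + (A *m xs - b).
Proof. by rewrite mulmxBr addrA addrNK. Qed.

Lemma norm2_resE (x : 'cV[R]_N) :
  norm2 (A *m x - b) = \sum_i (dotv (arow A i) x - b i 0) ^+ 2.
Proof. by apply: eq_bigr => i _; rewrite res_entry expr2. Qed.

Section OneStep.
Variable xs : 'cV[R]_N.
Hypothesis hmin : forall x, lsF A b xs <= lsF A b x.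
Hypothesis hM : (0 < M)%N.

Let Mpos : 0 < M%:R :> R. Proof. by rewrite ltr0n. Qed.

Lemma norm2_res (x : 'cV[R]_N) :
  norm2 (A *m x - b) = norm2 (A *m (x - xs)) + 2 * lsF A b xs.
Proof.
have h := mincond hmin (x - xs).
rewrite (AxbE x xs) /norm2 /lsF; move: h; set r0 := A *m xs - b; set u := A *m (x - xs); clearbody r0 u => h. rewrite dotvDl !dotvDr (dotvC u r0) h; by rewrite /norm2; field.
Qed.

Lemma step_u (x w : 'cV[R]_N) (sl2 a : R) :
  0 <= a -> norm2 w = 1 -> A^T *m A *m w = sl2 *: w ->
  M%:R^-1 * \sum_i dotv (x - a *: grad_f A b i x - xs) w ^+ 2
  <= (1 - 2 * a * sl2) * dotv (x - xs) w ^+ 2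
     + a ^+ 2 * M%:R * Ltilde A * norm2 (A *m (x - xs))
     + 2 * a ^+ 2 * M%:R * Ltilde A * lsF A b xs.
Proof.
move=> ha hw heig.
set d := dotv (x - xs) w.
pose res i := dotv (arow A i) x - b i 0.
pose s i := dotv (arow A i) w.
have e1 i : dotv (x - a *: grad_f A b i x - xs) w ^+ 2 =
   d ^+ 2 - 2 * a * M%:R * d * (res i * s i) + a ^+ 2 * M%:R ^+ 2 * (res i ^+ 2 * s i ^+ 2).
  rewrite addrAC dotvBl dotvZl /grad_f dotvZl -/d; rewrite /res /s; ring.
rewrite (eq_bigr _ (fun i _ => e1 i)) !big_split /= sumr_const card_ord sumrN -!mulr_sumr.
have hs : \sum_i res i * s i = sl2 * d.
  rewrite -dotvAres (AxbE x xs) dotvDl (mincond hmin) addr0 dotvAtA heig dotvZr.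
  by rewrite /d.
have hS : \sum_i res i ^+ 2 * s i ^+ 2 <= Ltilde A * (norm2 (A *m (x - xs)) + 2 * lsF A b xs).
  rewrite -norm2_res norm2_resE mulr_sumr; apply: ler_sum => i _.
  rewrite mulrC; apply: ler_wpM2r; first exact: sqr_ge0.
  exact: le_trans (cs_unit _ hw) (arow_le i).
rewrite hs.
have hM0 : M%:R^-1 * (M%:R : R) = 1 by rewrite mulVf // gt_eqF.
have ha2 : 0 <= a ^+ 2 * M%:R ^+ 2 by rewrite mulr_ge0 ?sqr_ge0.
have := ler_wpM2l ha2 hS.
rewrite -[M%:R ^+ 2]/(M%:R * M%:R : R).
move: hM0; set m := (M%:R : R); set L := Ltilde A; set F := lsF A b xs.
set S := \sum_i res i ^+ 2 * s i ^+ 2; set nA := norm2 _.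
move=> hM0 hle.
have -> : m^-1 * (d ^+ 2 *+ M - 2 * a * m * d * (sl2 * d) + a ^+ 2 * (m * m) * S)
  = d ^+ 2 - 2 * a * sl2 * d ^+2 + (m^-1 * m) * (a ^+ 2 * m * S).
  rewrite -mulr_natr -/m; field; exact: lt0r_neq0.
rewrite hM0 mul1r.
have hm : 0 < m by [].
nra.
Qed.

Lemma step_r (x : 'cV[R]_N) (a lo2 : R) :
  0 <= a -> 2 * a * M%:R * Ltilde A <= 1 ->
  lo2 * norm2 (x - xs) <= norm2 (A *m (x - xs)) ->
  M%:R^-1 * \sum_i norm2 (x - a *: grad_f A b i x - xs)
  <= (1 - a * lo2) * norm2 (x - xs) + 2 * a ^+ 2 * sgd_noise A b xs.
Proof.
move=> ha haL hlo.
set e := x - xs; set r := norm2 e.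
pose t i := dotv (arow A i) e.
pose z i := dotv (arow A i) xs - b i 0.
pose n i := norm2 (arow A i).
have e1 i : norm2 (x - a *: grad_f A b i x - xs) =
   r - 2 * a * M%:R * ((t i + z i) * t i) + a ^+ 2 * M%:R ^+ 2 * ((t i + z i) ^+ 2 * n i).
  rewrite addrAC norm2_linB /grad_f -/e dotvZr /norm2 dotvZl dotvZr (resE x xs).
  rewrite -/e -/(t i) -/(z i) (dotvC e) -/(t i) /r /n /norm2; ring.
rewrite (eq_bigr _ (fun i _ => e1 i)) !big_split /= sumr_const card_ord sumrN -!mulr_sumr.
have hs : \sum_i (t i + z i) * t i = norm2 (A *m e).
  rewrite (eq_bigr (fun i => (dotv (arow A i) x - b i 0) * dotv (arow A i) e)); last first.
    by move=> i _; rewrite (resE x xs).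
  by rewrite -dotvAres (AxbE x xs) dotvDl (mincond hmin) addr0.
have hsig : sgd_noise A b xs = M%:R * \sum_i z i ^+ 2 * n i.
  rewrite /sgd_noise mulr_sumr mulr_sumr; apply: eq_bigr => i _.
  rewrite /grad_f /norm2 dotvZl dotvZr /n /norm2 /z; field; exact: lt0r_neq0.
have hS : \sum_i (t i + z i) ^+ 2 * n i <=
          2 * Ltilde A * norm2 (A *m e) + 2 * \sum_i z i ^+ 2 * n i.
  rewrite /norm2 dotvA !mulr_sumr -big_split; apply: ler_sum => i _ /=.
  have hn : n i <= Ltilde A by exact: arow_le.
  have hn0 : 0 <= n i by exact: norm2_ge0.
  rewrite -/(t i).
  have h1 : 0 <= (t i - z i) ^+ 2 * n i by rewrite mulr_ge0 ?sqr_ge0.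
  have h2 : 0 <= (Ltilde A - n i) * t i ^+ 2 by rewrite mulr_ge0 ?sqr_ge0 ?subr_ge0.
  nra.
rewrite hs; move: hS; rewrite -/(norm2 (A *m e)) -/r.
set m := (M%:R : R); set L := Ltilde A; set S := \sum_i (t i + z i) ^+ 2 * n i.
set Z := \sum_i z i ^+ 2 * n i; set nA := norm2 (A *m e).
rewrite hsig -/m -/Z => hS.
have -> : m^-1 * (r *+ M - 2 * a * m * nA + a ^+ 2 * m ^+ 2 * S)
  = r - 2 * a * nA + a ^+ 2 * m * S.
  rewrite -mulr_natr -/m; field; exact: lt0r_neq0.
have hm : 0 < m by [].
have hL : 0 <= L by exact: Lt_ge0.
have hnA : 0 <= nA by exact: norm2_ge0.
have h1 : a ^+ 2 * m * S <= a ^+ 2 * m * (2 * L * nA + 2 * Z).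
  by apply: ler_wpM2l => //; rewrite mulr_ge0 ?sqr_ge0 ?ltW.
have h2 : a * (2 * a * m * L) * nA <= a * nA.
  apply: ler_wpM2r => //; rewrite -[X in _ <= X]mulr1; apply: ler_wpM2l => //; exact: haL.
have h3 : a * (lo2 * r) <= a * nA by apply: ler_wpM2l => //; exact: hlo.
nra.
Qed.
End OneStep.
End LA.

Section ProbPart.
Variable R : realType.
Variables (M N : nat) (A : 'M[R]_(M, N)) (b : 'cV[R]_M) (x0 : 'cV[R]_N).
Variables (alpha : nat -> R) (n : nat) (f : 'cV[R]_N -> R).
Hypothesis hM : (0 < M)%N.

Local Notation Omega := {ffun 'I_n.+1 -> 'I_M}.
Local Notation X k w := (sgd_iter A b x0 alpha w k).
Local Notation Y w := (f (X n.+1 w)).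

Definition dep (k : nat) (P : pred Omega) :=
  forall w w' : Omega, (forall t : 'I_n.+1, (t < k)%N -> w t = w' t) -> P w = P w'.

Lemma val_inord_le k : (nat_of_ord (@inord n k) <= k)%N.
Proof. by rewrite /inord val_insubd; case: ifP. Qed.

Lemma X_dep k (w w' : Omega) :
  (forall t : 'I_n.+1, (t < k)%N -> w t = w' t) -> X k w = X k w'.
Proof.
elim: k => [//|k IH] h /=.
rewrite IH; last by move=> t ht; apply: h; exact: ltnW.
by rewrite h // ltnS val_inord_le.
Qed.

Definition Claim (k : nat) (phi : 'cV[R]_N -> R) :=
  forall (P : pred Omega) x, dep k P -> (forall w, P w -> X k w = x) ->
    \sum_(w | P w) Y w <= #|P|%:R * phi x.

Lemma claim_base : Claim n.+1 f.
Proof.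
move=> P x _ hX.
rewrite (eq_bigr (fun _ => f x)); last by move=> w /hX ->.
by rewrite sumr_const mulr_natl.
Qed.

Lemma claim_mono k phi psi : Claim k phi -> (forall x, phi x <= psi x) -> Claim k psi.
Proof.
move=> h hle P x hd hX; apply: le_trans (h P x hd hX) _.
by apply: ler_wpM2l => //; exact: hle.
Qed.

Lemma claim_step k phi : (k <= n)%N -> Claim k.+1 phi ->
  Claim k (fun x => M%:R^-1 * \sum_i phi (x - alpha k *: grad_f A b i x)).
Proof.
move=> hk hC P x hd hX.
set k0 : 'I_n.+1 := inord k.
have hk0 : nat_of_ord k0 = k by rewrite /k0 inordK.
pose Pi (i : 'I_M) := [pred w : Omega | P w && (w k0 == i)].
pose upd (j : 'I_M) (w : Omega) : Omega := [ffun t => if t == k0 then j else w t].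
have hdepP j w : P (upd j w) = P w.
  apply: hd => t ht; rewrite /upd ffunE; case: eqP => // e.
  by move: ht; rewrite e hk0 ltnn.
have hcard i j : (#|Pi i| <= #|Pi j|)%N.
  rewrite -(@card_in_imset _ _ (upd j) (Pi i)).
    apply: subset_leq_card; apply/subsetP => y /imsetP [w hw ->].
    move: hw; rewrite !inE hdepP => /andP [-> _] /=.
    by rewrite /upd ffunE eqxx.
  move=> w1 w2; rewrite !inE => /andP [_ /eqP h1] /andP [_ /eqP h2] e.
  apply/ffunP => t; have := congr1 (fun g : Omega => g t) e.
  by rewrite /upd !ffunE; case: eqP => [->|_] //; rewrite h1 h2.
have hceq i : #|Pi i| = #|Pi (Ordinal hM)|.
  by apply/eqP; rewrite eqn_leq !hcard.
set c := #|Pi (Ordinal hM)|.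
have hPcard : #|P| = (M * c)%N.
  rewrite -sum1_card (partition_big (fun w : Omega => w k0) xpredT) //=.
  rewrite (eq_bigr (fun _ => c)); first by rewrite sum_nat_const card_ord.
  move=> i _; rewrite /c -(hceq i) -sum1_card; apply: eq_bigl => w.
  by rewrite !inE.
rewrite (partition_big (fun w : Omega => w k0) xpredT) //=.
apply: (@le_trans _ _ (\sum_(i < M) c%:R * phi (x - alpha k *: grad_f A b i x))).
  apply: ler_sum => i _.
  have := hC (Pi i) (x - alpha k *: grad_f A b i x).
  rewrite (hceq i) -/c.
  have -> : (\sum_(w | Pi i w) Y w) = \sum_(w | P w && (w k0 == i)) Y w by [].
  apply.
    move=> w w' h /=; rewrite (hd w w'); last by move=> t ht; apply: h; exact: ltnW.
    by rewrite h // hk0.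
  move=> w /andP [hP /eqP hi] /=; rewrite -/k0 hi hX //.
rewrite hPcard natrM -mulr_sumr mulrA.
have hm : (M%:R : R) != 0 by rewrite pnatr_eq0 -lt0n.
by rewrite (mulrC M%:R) mulfK.
Qed.
End ProbPart.

Section CoefRec.
Variables (R : realType) (M : nat) (Lt cA smax smin sl Fstar sig2 : R).
Variables (alpha : nat -> R) (n : nat).
Local Notation Ak := (Acoef sl alpha n).
Local Notation Bk := (Bcoef M Lt cA smax smin sl alpha n).
Local Notation Ck := (Ccoef M Lt cA smax smin sl Fstar sig2 alpha n).
Local Notation Af a := (Afac sl a).
Local Notation Bf a := (Bfac M Lt cA smax a).
Local Notation Cf a := (Cfac M Lt Fstar a).
Local Notation pf a := (pfac smin a).
Local Notation qf a := (qfac sig2 a).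

Lemma A_last : Ak n.+1 = 1.
Proof. by rewrite /Acoef big_geq. Qed.
Lemma B_last : Bk n.+1 = 0.
Proof. by rewrite /Bcoef big_geq. Qed.
Lemma C_n : Ck n = Cf (alpha n).
Proof. by rewrite /Ccoef big_geq // add0r. Qed.

Lemma A_rec k : (k <= n)%N -> Ak k = Af (alpha k) * Ak k.+1.
Proof. by move=> hk; rewrite /Acoef big_ltn. Qed.

Lemma B_rec k : (k <= n)%N -> Bk k = Ak k.+1 * Bf (alpha k) + pf (alpha k) * Bk k.+1.
Proof.
move=> hk; rewrite /Bcoef big_ltn // [\prod_(k <= i < k) _]big_geq // mulr1; congr (_ + _).
rewrite mulr_sumr; apply: eq_big_nat => j /andP [hj _].
by rewrite (big_ltn hj); ring.
Qed.

Lemma C_rec k : (k < n)%N ->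
  Ck k = qf (alpha k) * Bk k.+1 + Ak k.+1 * Cf (alpha k) + Ck k.+1.
Proof.
move=> hk; rewrite /Ccoef big_ltn //=; ring.
Qed.
End CoefRec.

Theorem lemma11 (R : realType) (M N : nat) (A : 'M[R]_(M, N)) (b : 'cV[R]_M)
  (sigma : 'I_N -> R) (v : 'I_N -> 'cV[R]_N) (xs x0 : 'cV[R]_N)
  (alpha : nat -> R) (l : 'I_N) (n : nat) :
  (N <= M)%N ->
  \rank A = N ->
  (* singular values (ordered, positive) with orthonormal right singular vectors *)
  (forall i j : 'I_N, (i <= j)%N -> sigma j <= sigma i) ->
  (forall i, 0 < sigma i) ->
  (forall i j, dotv (v i) (v j) = (i == j)%:R) ->
  (forall i, A^T *m A *m v i = sigma i ^+ 2 *: v i) ->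
  (* xs is the minimizer of F *)
  (forall x, lsF A b xs <= lsF A b x) ->
  (* step sizes *)
  (forall k, 0 < alpha k /\ alpha k <= (2 * M%:R * Ltilde A)^-1) ->
  let smax := \big[Num.max/0]_(i < N) sigma i in
  let smin := \big[Num.min/smax]_(i < N) sigma i in
  let cA := smax ^+ 2 / smin ^+ 2 in
  let Fstar := lsF A b xs in
  let sig2 := sgd_noise A b xs in
  let Ak := Acoef (sigma l) alpha n in
  let Bk := Bcoef M (Ltilde A) cA smax smin (sigma l) alpha n in
  let Ck := Ccoef M (Ltilde A) cA smax smin (sigma l) Fstar sig2 alpha n in
  let X (k : nat) (w : {ffun 'I_n.+1 -> 'I_M}) := sgd_iter A b x0 alpha w k in
  let Y (w : {ffun 'I_n.+1 -> 'I_M}) := dotv (X n.+1 w - xs) (v l) ^+ 2 in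
  (forall k, (k <= n)%N -> forall w : {ffun 'I_n.+1 -> 'I_M},
     cond_exp Y (X k) w <=
       Ak k * dotv (X k w - xs) (v l) ^+ 2 + Bk k * norm2 (X k w - xs) + Ck k)
  /\
  expect Y <= Ak 0%N * dotv (x0 - xs) (v l) ^+ 2 + Bk 0%N * norm2 (x0 - xs) + Ck 0%N.
Proof.
move=> hNM hrank hord hpos hon heig hmin hstep smax smin cA Fstar sig2 Ak Bk Ck X Y.
have hN : (0 < N)%N := leq_ltn_trans (leq0n _) (ltn_ord l).
have hM : (0 < M)%N := leq_trans hN hNM.
have hMr : (0 : R) < M%:R by rewrite ltr0n.
set Lt := Ltilde A.
have hLt0 : 0 <= Lt := Lt_ge0 A.
have hLpos : 0 < 2 * M%:R * Lt.
  rewrite lt_def mulr_ge0 ?mulr_ge0 // ?ler0n // andbT.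
  apply/negP => /eqP e; have [h1 h2] := hstep 0%N; move: h2; rewrite -/Lt e invr0.
  by rewrite leNgt h1.
have ha k : 0 < alpha k /\ 2 * alpha k * M%:R * Lt <= 1.
  have [h1 h2] := hstep k; split => //.
  have := ler_wpM2r (ltW hLpos) h2; rewrite mulVf ?gt_eqF // -/Lt.
  by have -> : 2 * alpha k * M%:R * Lt = alpha k * (2 * M%:R * Lt) by ring.
have hsmax j : sigma j <= smax := le_bigmax 0 sigma j.
have hsmin j : smin <= sigma j := bigmin_le smax j sigma.
have hsmaxpos : 0 < smax := lt_le_trans (hpos l) (hsmax l).
have hsminpos : 0 < smin.
  rewrite /smin; elim/big_ind: _ => //.
    by move=> x y hx hy; rewrite lt_min hx.
have hcA : 1 <= cA.
  rewrite /cA ler_pdivlMr ?exprn_gt0 // mul1r.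
  have := hsmin l; have := hsmax l; have := hpos l; nra.
have hvl : norm2 (v l) = 1 by rewrite /norm2 hon eqxx.
have hsl : sigma l ^+ 2 <= M%:R * Lt.
  have e : norm2 (A *m v l) = sigma l ^+ 2.
    by rewrite /norm2 dotvAtA heig dotvZr -/(norm2 (v l)) hvl mulr1.
  rewrite -e /norm2 dotvA mulr_natl -[X in Lt *+ X](card_ord M) -sumr_const.
  apply: ler_sum => i _; rewrite -expr2.
  exact: le_trans (cs_unit _ hvl) (arow_le A i).
have hAf k : 0 <= Afac (sigma l) (alpha k).
  rewrite /Afac; have [h1 h2] := ha k; nra.
have hpf k : 0 <= pfac smin (alpha k).
  rewrite /pfac; have [h1 h2] := ha k.
  have h3 : smin ^+ 2 <= sigma l ^+ 2.
    have := hsmin l; nra.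
  nra.
have hBf k : 0 <= Bfac M Lt cA smax (alpha k).
  have H1 := ltW (ha k).1; have H2 := ltW hsmaxpos; have H3 := ltW hsminpos.
  by rewrite /Bfac !mulr_ge0 ?sqr_ge0 ?ler0n ?invr_ge0 ?exprn_ge0.
have hAk k : 0 <= Ak k by apply: prodr_ge0 => i _.
have hBk k : 0 <= Bk k.
  apply: sumr_ge0 => j _; apply: mulr_ge0; last by apply: prodr_ge0 => i _; exact: hpf.
  by apply: mulr_ge0; [apply: prodr_ge0 => i _; exact: hAf | exact: hBf].
have hbnd e : smin ^+ 2 * norm2 e <= norm2 (A *m e) <= cA * smax ^+ 2 * norm2 e.
  have /andP [h1 h2] := normA_bounds hon heig e (lo := smin) (hi := smax)
    (fun j => ltac:(apply/andP; split; have := hsmin j; have := hsmax j; have := hpos j; nra)).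
  rewrite h1 /=; apply: le_trans h2 _; rewrite -mulrA ler_peMl //.
  by rewrite mulr_ge0 ?sqr_ge0 ?norm2_ge0.
pose G (a0 bb c : R) (x : 'cV[R]_N) :=
  a0 * dotv (x - xs) (v l) ^+ 2 + bb * norm2 (x - xs) + c.
pose f x := dotv (x - xs) (v l) ^+ 2.
have hstepG k a0 bb c : (k <= n)%N -> 0 <= a0 -> 0 <= bb ->
  Claim A b x0 alpha n f k.+1 (G a0 bb c) ->
  Claim A b x0 alpha n f k (G (a0 * Afac (sigma l) (alpha k))
     (a0 * Bfac M Lt cA smax (alpha k) + bb * pfac smin (alpha k))
     (a0 * Cfac M Lt Fstar (alpha k) + bb * qfac sig2 (alpha k) + c)).
  move=> hk ha0 hbb hC; apply: claim_mono (claim_step hM hk hC) _ => x.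
  have [hak hakL] := ha k.
  have hu := step_u hmin hM x (ltW hak) hvl (heig l).
  have /andP [hlo hhi] := hbnd (x - xs).
  have hr := step_r hmin hM (ltW hak) hakL hlo.
  rewrite /G !big_split /= sumr_const card_ord -!mulr_sumr.
  have -> : M%:R^-1 * (a0 * \sum_i dotv (x - alpha k *: grad_f A b i x - xs) (v l) ^+ 2 +
      bb * \sum_i norm2 (x - alpha k *: grad_f A b i x - xs) + c *+ M)
    = a0 * (M%:R^-1 * \sum_i dotv (x - alpha k *: grad_f A b i x - xs) (v l) ^+ 2) +
      bb * (M%:R^-1 * \sum_i norm2 (x - alpha k *: grad_f A b i x - xs)) + c.
    rewrite -mulr_natr; field; exact: lt0r_neq0.
  move: hu hr; rewrite -/Lt -/Fstar -/sig2 /Afac /Bfac /Cfac /pfac /qfac.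
  set U := M%:R^-1 * _; set Rr := M%:R^-1 * _ => hu hr.
  have hnA : alpha k ^+ 2 * M%:R * Lt * norm2 (A *m (x - xs))
      <= alpha k ^+ 2 * M%:R * Lt * (cA * smax ^+ 2 * norm2 (x - xs)).
    apply: ler_wpM2l _ hhi; apply: mulr_ge0 => //; apply: mulr_ge0; [exact: sqr_ge0 | exact: ler0n].
  have h1 := ler_wpM2l ha0 hu.
  have h2 := ler_wpM2l hbb hr.
  nra.
have eqle (p q : R) : p = q -> p <= q by move=> ->.
have hclaim : forall d, (d <= n)%N ->
  Claim A b x0 alpha n f (n - d)%N (G (Ak (n - d)%N) (Bk (n - d)%N) (Ck (n - d)%N)).
  elim => [_|d IH hd].
    rewrite subn0.
    have hb : Claim A b x0 alpha n f n.+1 (G 1 0 0).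
      apply: claim_mono (@claim_base _ _ _ A b x0 alpha n f) _ => x.
      by apply: eqle; rewrite /G /f mul1r mul0r !addr0.
    have H := hstepG n 1 0 0 (leqnn n) ler01 (lexx 0) hb.
    have eA : Ak n = Afac (sigma l) (alpha n) by rewrite /Ak A_rec // A_last mulr1.
    have eB : Bk n = Bfac M Lt cA smax (alpha n).
      by rewrite /Bk B_rec // A_last B_last mul1r mulr0 addr0.
    have eC : Ck n = Cfac M Lt Fstar (alpha n) by rewrite /Ck C_n.
    apply: claim_mono H _ => x; apply: eqle; rewrite /G eA eB eC; ring.
  set k := (n - d.+1)%N.
  have hk : (k < n)%N by rewrite /k; lia.
  have e : (n - d)%N = k.+1 by rewrite /k; lia.
  have IH' := IH (ltnW hd); rewrite e in IH'.
  have H := hstepG k _ _ _ (ltnW hk) (hAk _) (hBk _) IH'.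
  apply: claim_mono H _ => x; apply: eqle.
  rewrite /G /Ak /Bk /Ck (@A_rec _ _ _ _ _ (ltnW hk)) (@B_rec _ _ _ _ _ _ _ _ _ _ (ltnW hk)) (@C_rec _ _ _ _ _ _ _ _ _ _ _ _ hk).
  ring.
split.
  move=> k hk w.
  have := hclaim (n - k)%N (leq_subr k n); rewrite subKn // => hC.
  pose P := [pred w' : {ffun 'I_n.+1 -> 'I_M} | X k w' == X k w].
  have hP : (0 < #|P|)%N by apply/card_gt0P; exists w; rewrite inE eqxx.
  have := hC P (X k w).
  have hd : dep k P.
    by move=> w1 w2 h /=; rewrite /X (X_dep _ _ _ _ h).
  move=> /(_ hd) /(_ (fun w' => @eqP _ _ _)) hS.
  rewrite /cond_exp ler_pdivrMr ?ltr0n // mulrC; exact: hS.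
have := hclaim n (leqnn n); rewrite subnn => hC.
have := hC xpredT x0 (fun _ _ _ => erefl) (fun _ _ => erefl) => hS.
have hO : (0 < #|{ffun 'I_n.+1 -> 'I_M}|)%N.
  by apply/card_gt0P; exists [ffun _ => Ordinal hM].
rewrite /expect ler_pdivrMr ?ltr0n // mulrC; exact: hS.
Qed.
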